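(* Let $F$ be $L$-periodic and infinitely differentiable. Then for every fixed $i\ge1$ and $j\ge1$, $$I\big(c^{(N)}_{ij}\big)=\limsup_{N\to\infty}\frac{\ln|c^{(N)}_{ij}|}{\ln N}\le\frac{j-1}{2}.$$
   Context: Let $N\ge2$, $L>0$, $\Delta=L/N$, $x_i=(i-1)L/N$, indices modulo $N$. Discrete derivatives act on the index $i$: $(\nabla^+g)(i)=g(i+1)-g(i)$, $(\nabla^-g)(i)=g(i)-g(i-1)$. Let $d_m=(-1)^m(m+1)$. Define $c^{(N)}_{i1}=F(x_i)$, $c^{(N)}_{i2}=0$, and for $j\ge3$ $$c_{ij}=-\sum_{m=1}^{\lfloor (j-1)/2\rfloor}\ \sum_{j_1+\dots+j_m=j-m-1}\frac{d_m}{j}\Delta^{-2-m}\,\nabla^-\!\Big(\prod_{p=1}^m\frac{\nabla^+c_{i,j_p}}{j_p+1}\Big)+\sum_{k=1}^{\lfloor (j-1)/2\rfloor}\ \sum_{j_1+\dots+j_k=j-k-1}\frac{1}{j\,k!}F^{(k)}(x_i)\prod_{p=1}^k\frac{c_{i,j_p}}{j_p+1},$$ inner sums over ordered tuples of positive integers. (These are the Taylor coefficients at $t=0$ of the velocities $v_i$ for the system $\ddot x_i=(x_i-x_{i-1})^{-2}-(x_{i+1}-x_i)^{-2}+F(x_i)$ on the circle of length $L$ with $x_i(0)=(i-1)L/N$, $\dot x_i(0)=0$.) *)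

(* Defs.v *)
From Stdlib Require Import Reals List ZArith Arith.
Import ListNotations.
Open Scope R_scope.

Definition xpos (L : R) (N : nat) (i : Z) : R :=
  IZR (((i - 1) mod Z.of_nat N)%Z) * L / INR N.

(* All ordered tuples (j_1,...,j_m) of positive integers with sum s. *)
Fixpoint comps (m s : nat) : list (list nat) :=
  match m with
  | O => match s with O => [nil] | _ => nil end
  | S m' => flat_map (fun a => map (cons a) (comps m' (s - a))) (seq 1 s)
  end.

Definition sumR (l : list R) : R := fold_right Rplus 0 l.
Definition prodR (l : list R) : R := fold_right Rmult 1 l.

Definition dcoef (m : nat) : R := (-1) ^ m * INR (m + 1).

(* Fuel-based definition of the recursion; Fd k is the k-th derivative F^(k).
   Indices i are integers; discrete derivatives shift i by +-1. *)
Fixpoint cfuel (L : R) (Fd : nat -> R -> R) (N : nat) (fuel : nat)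
    (i : Z) (j : nat) {struct fuel} : R :=
  match fuel with
  | O => 0
  | S fuel' =>
    match j with
    | O => 0
    | S O => Fd O (xpos L N i)
    | S (S O) => 0
    | S (S (S _)) =>
      let c := cfuel L Fd N fuel' in
      let Delta := L / INR N in
      let P := fun (t : list nat) (i0 : Z) =>
        prodR (map (fun jp => (c (i0 + 1)%Z jp - c i0 jp) / INR (jp + 1)) t) in
      - sumR (map (fun m =>
            sumR (map (fun t =>
              dcoef m / INR j * / (Delta ^ (2 + m)) * (P t i - P t (i - 1)%Z))
              (comps m (j - m - 1))))
           (seq 1 ((j - 1) / 2)))
      + sumR (map (fun k =>
            sumR (map (fun t =>
              / (INR j * INR (fact k)) * Fd k (xpos L N i) *
              prodR (map (fun jp => c i jp / INR (jp + 1)) t))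
              (comps k (j - k - 1))))
           (seq 1 ((j - 1) / 2)))
    end
  end.

Definition ccoef (L : R) (Fd : nat -> R -> R) (N : nat) (i : Z) (j : nat) : R :=
  cfuel L Fd N j i j.

(* Main.v *)
Require Import Defs.
From Stdlib Require Import Reals List ZArith Arith Lra Lia FunctionalExtensionality.
From Stdlib Require Import IndefiniteDescription.
Open Scope R_scope.

Definition Dd (a : Z -> R) : Z -> R := fun i => a (i + 1)%Z - a i.
Fixpoint Dk (k : nat) (a : Z -> R) : Z -> R :=
  match k with O => a | S k' => Dk k' (Dd a) end.

Lemma Dk_plus k : forall a b i, Dk k (fun i => a i + b i) i = Dk k a i + Dk k b i.
Proof.
  induction k as [|k IH]; intros a b i; simpl; [reflexivity|].
  rewrite <- IH. f_equal. unfold Dd. apply functional_extensionality; intro; ring.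
Qed.

Lemma Dk_scal k : forall c a i, Dk k (fun i => c * a i) i = c * Dk k a i.
Proof.
  induction k as [|k IH]; intros c a i; simpl; [reflexivity|].
  rewrite <- IH. f_equal. unfold Dd. apply functional_extensionality; intro; ring.
Qed.

Lemma Dk_shift k : forall s a i, Dk k (fun i => a (i + s)%Z) i = Dk k a (i + s)%Z.
Proof.
  induction k as [|k IH]; intros s a i; simpl; [reflexivity|].
  rewrite <- IH. f_equal. unfold Dd. apply functional_extensionality; intro x.
  replace (x + 1 + s)%Z with (x + s + 1)%Z by ring. reflexivity.
Qed.

Lemma Dk_const k : forall c i, Dk k (fun _ => c) i = match k with O => c | _ => 0 end.
Proof.
  destruct k as [|k]; intros c i; simpl; [reflexivity|].
  replace (Dd (fun _ : Z => c)) with (fun i:Z => 0 * c).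
  2:{ unfold Dd; apply functional_extensionality; intro; ring. }
  rewrite Dk_scal. ring.
Qed.

Lemma Dk_minus k a b i : Dk k (fun i => a i - b i) i = Dk k a i - Dk k b i.
Proof.
  replace (fun i => a i - b i) with (fun i => a i + (-1) * b i).
  2:{ apply functional_extensionality; intro; ring. }
  rewrite Dk_plus, Dk_scal. ring.
Qed.

Lemma Dk_back k a i : Dk k (fun i => a i - a (i - 1)%Z) i = Dk (S k) a (i - 1)%Z.
Proof.
  replace (fun i => a i - a (i - 1)%Z) with (fun i => a i - a (i + -1)%Z)
    by (apply functional_extensionality; intro x; replace (x + -1)%Z with (x - 1)%Z by ring; reflexivity).
  rewrite Dk_minus. simpl. unfold Dd.
  rewrite Dk_minus.
  rewrite (Dk_shift k 1 a). rewrite (Dk_shift k (-1) a i).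
  replace (i - 1 + 1)%Z with i by ring. replace (i + -1)%Z with (i - 1)%Z by ring.
  reflexivity.
Qed.

Lemma Dk_fwd k a i : Dk k (fun i => a (i + 1)%Z - a i) i = Dk (S k) a i.
Proof. reflexivity. Qed.

Fixpoint Q (k : nat) (Ma Mb : nat -> R) : R :=
  match k with
  | O => Ma O * Mb O
  | S k' => Q k' (fun r => Ma (S r)) Mb + Q k' Ma (fun r => Mb (S r))
  end.

Lemma Q_nonneg k : forall Ma Mb, (forall r, 0 <= Ma r) -> (forall r, 0 <= Mb r) -> 0 <= Q k Ma Mb.
Proof.
  induction k as [|k IH]; intros Ma Mb Ha Hb; simpl.
  - apply Rmult_le_pos; auto.
  - apply Rplus_le_le_0_compat; apply IH; auto.
Qed.

Lemma prod_bound k : forall (a b : Z -> R) Ma Mb X Y D, 0 < D ->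
  (forall r i, Rabs (Dk r a i) <= Ma r * D ^ r * X) ->
  (forall r i, Rabs (Dk r b i) <= Mb r * D ^ r * Y) ->
  forall i, Rabs (Dk k (fun i => a i * b i) i) <= Q k Ma Mb * D ^ k * (X * Y).
Proof.
  induction k as [|k IH]; intros a b Ma Mb X Y D HD Ha Hb i.
  - simpl. rewrite Rabs_mult. specialize (Ha 0%nat i). specialize (Hb 0%nat i). simpl in *.
    replace (Ma 0%nat * Mb 0%nat * 1 * (X * Y)) with ((Ma 0%nat * 1 * X) * (Mb 0%nat * 1 * Y)) by ring.
    apply Rmult_le_compat; auto using Rabs_pos.
  - simpl Dk.
    set (a' := fun i => Dd a i / D).
    set (b1 := fun i => b (i + 1)%Z).
    set (b' := fun i => Dd b i / D).
    replace (Dd (fun i => a i * b i)) with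
      (fun i => D * (a' i * b1 i) + D * (a i * b' i)).
    2:{ apply functional_extensionality; intro x. unfold a', b1, b', Dd. field. lra. }
    rewrite Dk_plus, !Dk_scal.
    eapply Rle_trans; [apply Rabs_triang|]. rewrite !Rabs_mult, (Rabs_right D) by lra.
    assert (Ha' : forall r i, Rabs (Dk r a' i) <= (fun r => Ma (S r)) r * D ^ r * X).
    { intros r x. unfold a'. unfold Rdiv.
      replace (fun i => Dd a i * / D) with (fun i => / D * Dd a i)
        by (apply functional_extensionality; intro; ring).
      rewrite Dk_scal. rewrite Rabs_mult, Rabs_right by (apply Rle_ge, Rlt_le, Rinv_0_lt_compat; lra).
      specialize (Ha (S r) x). simpl in Ha.
      apply (Rmult_le_compat_l (/ D)) in Ha; [|apply Rlt_le, Rinv_0_lt_compat; lra].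
      eapply Rle_trans; [exact Ha|]. right. field. lra. }
    assert (Hb' : forall r i, Rabs (Dk r b' i) <= (fun r => Mb (S r)) r * D ^ r * Y).
    { intros r x. unfold b'. unfold Rdiv.
      replace (fun i => Dd b i * / D) with (fun i => / D * Dd b i)
        by (apply functional_extensionality; intro; ring).
      rewrite Dk_scal. rewrite Rabs_mult, Rabs_right by (apply Rle_ge, Rlt_le, Rinv_0_lt_compat; lra).
      specialize (Hb (S r) x). simpl in Hb.
      apply (Rmult_le_compat_l (/ D)) in Hb; [|apply Rlt_le, Rinv_0_lt_compat; lra].
      eapply Rle_trans; [exact Hb|]. right. field. lra. }
    assert (Hb1 : forall r i, Rabs (Dk r b1 i) <= Mb r * D ^ r * Y).
    { intros r x. unfold b1. rewrite Dk_shift. apply Hb. }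
    pose proof (IH a' b1 _ _ X Y D HD Ha' Hb1 i) as H1.
    pose proof (IH a b' _ _ X Y D HD Ha Hb' i) as H2.
    simpl pow.
    apply (Rmult_le_compat_l D) in H1; [|lra].
    apply (Rmult_le_compat_l D) in H2; [|lra].
    eapply Rle_trans; [apply Rplus_le_compat; [exact H1|exact H2]|].
    right; simpl Q; ring.
Qed.
Definition Sm (L : R) (A : nat -> Z -> R) (p q : nat) : Prop :=
  exists M : nat -> R, (forall k, 0 <= M k) /\
   forall N k i, (1 <= N)%nat ->
     Rabs (Dk k (A N) i) <= M k * (L / INR N) ^ k * (INR N ^ p / INR N ^ q).

Lemma INR_pos N : (1 <= N)%nat -> 0 < INR N.
Proof. intro; apply lt_0_INR; lia. Qed.

Lemma NX_pos N p q : (1 <= N)%nat -> 0 < INR N ^ p / INR N ^ q.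
Proof. intro H. pose proof (INR_pos N H). unfold Rdiv. apply Rmult_lt_0_compat.
  apply pow_lt; lra. apply Rinv_0_lt_compat, pow_lt; lra. Qed.

Lemma Sm_ext L A B p q : Sm L A p q -> (forall N i, (1 <= N)%nat -> A N i = B N i) -> Sm L B p q.
Proof.
  intros [M [HM H]] E. exists M; split; auto. intros N k i HN.
  replace (B N) with (A N) by (apply functional_extensionality; intro; auto). auto.
Qed.

Lemma Sm_zero L p q : Sm L (fun _ _ => 0) p q.
Proof.
  exists (fun _ => 0). split; [intro; lra|]. intros N k i HN.
  rewrite Dk_const.
  replace (match k with O => 0 | S _ => 0 end) with 0 by (destruct k; reflexivity).
  rewrite Rabs_R0. lra.
Qed.

Lemma Sm_const L c : 0 < L -> Sm L (fun _ _ => c) 0 0.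
Proof.
  intros hL. exists (fun k => match k with O => Rabs c | _ => 0 end). split.
  - intro k; destruct k; [apply Rabs_pos|lra].
  - intros N k i HN. rewrite Dk_const. destruct k; simpl.
    + right. field.
    + rewrite Rabs_R0. lra.
Qed.

Lemma Sm_plus L A B p q : Sm L A p q -> Sm L B p q -> Sm L (fun N i => A N i + B N i) p q.
Proof.
  intros [M1 [H1 A1]] [M2 [H2 A2]]. exists (fun k => M1 k + M2 k). split.
  - intro k; specialize (H1 k); specialize (H2 k); lra.
  - intros N k i HN. rewrite Dk_plus.
    eapply Rle_trans; [apply Rabs_triang|].
    eapply Rle_trans; [apply Rplus_le_compat; [apply A1|apply A2]; auto|]. right; ring.
Qed.

Lemma Sm_scal L c A p q : Sm L A p q -> Sm L (fun N i => c * A N i) p q.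
Proof.
  intros [M [H1 A1]]. exists (fun k => Rabs c * M k). split.
  - intro k; apply Rmult_le_pos; auto using Rabs_pos.
  - intros N k i HN. rewrite Dk_scal, Rabs_mult.
    eapply Rle_trans; [apply Rmult_le_compat_l; [apply Rabs_pos|apply A1; auto]|]. right; ring.
Qed.

Lemma Sm_weaken L A p q p' q' : 0 < L -> (p + q' <= p' + q)%nat -> Sm L A p q -> Sm L A p' q'.
Proof.
  intros hL Hle [M [H1 A1]]. exists M. split; auto. intros N k i HN.
  eapply Rle_trans; [apply A1; auto|].
  pose proof (INR_pos N HN) as HNp.
  assert (0 <= M k * (L / INR N) ^ k).
  { apply Rmult_le_pos; auto. apply pow_le. unfold Rdiv. apply Rmult_le_pos; [lra|apply Rlt_le, Rinv_0_lt_compat; lra]. }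
  apply Rmult_le_compat_l; auto.
  assert (INR N ^ (p + q') <= INR N ^ (p' + q)) by (apply Rle_pow; auto; apply (le_INR 1); lia).
  rewrite !pow_add in H0.
  assert (0 < INR N ^ q) by (apply pow_lt; lra). assert (0 < INR N ^ q') by (apply pow_lt; lra).
  apply (Rmult_le_reg_r (INR N ^ q * INR N ^ q')). apply Rmult_lt_0_compat; auto.
  replace (INR N ^ p / INR N ^ q * (INR N ^ q * INR N ^ q')) with (INR N ^ p * INR N ^ q') by (field; lra).
  replace (INR N ^ p' / INR N ^ q' * (INR N ^ q * INR N ^ q')) with (INR N ^ p' * INR N ^ q) by (field; lra).
  exact H0.
Qed.
Lemma Sm_mul L A B p1 q1 p2 q2 : 0 < L -> Sm L A p1 q1 -> Sm L B p2 q2 ->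
  Sm L (fun N i => A N i * B N i) (p1 + p2) (q1 + q2).
Proof.
  intros hL [M1 [H1 A1]] [M2 [H2 A2]]. exists (fun k => Q k M1 M2). split.
  - intro k; apply Q_nonneg; auto.
  - intros N k i HN. pose proof (INR_pos N HN).
    eapply Rle_trans.
    + apply (prod_bound k (A N) (B N) M1 M2 (INR N ^ p1 / INR N ^ q1) (INR N ^ p2 / INR N ^ q2) (L / INR N)).
      * unfold Rdiv; apply Rmult_lt_0_compat; [lra|apply Rinv_0_lt_compat; lra].
      * intros; apply A1; auto.
      * intros; apply A2; auto.
    + right. rewrite !pow_add. field. split; apply pow_nonzero; lra.
Qed.

Lemma Sm_back L A p q : 0 < L -> Sm L A p q -> Sm L (fun N i => A N i - A N (i - 1)%Z) p (S q).
Proof.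
  intros hL [M [H1 A1]]. exists (fun k => M (S k) * L). split.
  - intro k; apply Rmult_le_pos; auto; lra.
  - intros N k i HN. pose proof (INR_pos N HN).
    rewrite Dk_back. eapply Rle_trans; [apply A1; auto|]. right. simpl pow. field.
    split; [apply pow_nonzero|]; lra.
Qed.

Lemma Sm_fwd L A p q : 0 < L -> Sm L A p q -> Sm L (fun N i => A N (i + 1)%Z - A N i) p (S q).
Proof.
  intros hL [M [H1 A1]]. exists (fun k => M (S k) * L). split.
  - intro k; apply Rmult_le_pos; auto; lra.
  - intros N k i HN. pose proof (INR_pos N HN).
    change (Dk k (fun i => A N (i + 1)%Z - A N i) i) with (Dk (S k) (A N) i).
    eapply Rle_trans; [apply A1; auto|]. right. simpl pow. field.
    split; [apply pow_nonzero|]; lra.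
Qed.

Lemma Sm_mulN L A p q n : Sm L A p q -> Sm L (fun N i => INR N ^ n * A N i) (p + n) q.
Proof.
  intros [M [H1 A1]]. exists M. split; auto.
  intros N k i HN. pose proof (INR_pos N HN).
  rewrite Dk_scal, Rabs_mult, Rabs_right by (apply Rle_ge, pow_le; lra).
  eapply Rle_trans; [apply Rmult_le_compat_l; [apply pow_le; lra|apply A1; auto]|].
  right. rewrite pow_add. field. apply pow_nonzero; lra.
Qed.

Lemma Sm_sum {X : Type} L p q (l : list X) (f : X -> nat -> Z -> R) :
  (forall x, In x l -> Sm L (f x) p q) ->
  Sm L (fun N i => sumR (map (fun x => f x N i) l)) p q.
Proof.
  induction l as [|x l IH]; intros H; simpl.
  - exact (Sm_zero L p q).
  - apply (Sm_plus L (f x) (fun N i => sumR (map (fun x => f x N i) l))).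
    + apply H; left; auto.
    + apply IH; intros; apply H; right; auto.
Qed.

Lemma Sm_prod L (t : list nat) (f : nat -> nat -> Z -> R) (e qf : nat -> nat) : 0 < L ->
  (forall x, In x t -> Sm L (f x) (e x) (qf x)) ->
  Sm L (fun N i => prodR (map (fun x => f x N i) t)) (list_sum (map e t)) (list_sum (map qf t)).
Proof.
  intros hL. induction t as [|x t IH]; intros H; simpl.
  - exact (Sm_const L 1 hL).
  - apply (Sm_mul L (f x) (fun N i => prodR (map (fun x => f x N i) t))); auto.
    + apply H; left; auto.
    + apply IH; intros; apply H; right; auto.
Qed.
Lemma deriv_shift (G : R -> R) x D l : derivable_pt_lim G (x + D) l ->
  derivable_pt_lim (fun y => G (y + D)) x l.
Proof.
  intros H eps Heps. destruct (H eps Heps) as [del Hd]. exists del. intros h Hh Hlt.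
  replace (x + h + D) with (x + D + h) by ring. apply Hd; auto.
Qed.

Lemma samp_bound r : forall (G : nat -> R -> R) (B : nat -> R) D c, 0 <= D ->
  (forall n x, derivable_pt_lim (G n) x (G (S n) x)) -> (forall n x, Rabs (G n x) <= B n) ->
  forall i, Rabs (Dk r (fun i => G 0%nat (IZR i * D + c)) i) <= B r * D ^ r.
Proof.
  induction r as [|r IH]; intros G B D c HD Hd Hb i.
  - simpl. rewrite Rmult_1_r. apply Hb.
  - simpl Dk.
    set (G' := fun n x => G n (x + D) - G n x).
    replace (Dd (fun i => G 0%nat (IZR i * D + c))) with (fun i => G' 0%nat (IZR i * D + c)).
    2:{ apply functional_extensionality; intro x. unfold G', Dd. rewrite plus_IZR.
        f_equal. f_equal. ring. }
    eapply Rle_trans.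
    + apply (IH G' (fun n => D * B (S n))); auto.
      * intros n x. unfold G'. apply (derivable_pt_lim_minus (fun y => G n (y + D)) (G n)).
        apply deriv_shift; auto. auto.
      * intros n x. unfold G'. destruct HD as [HD|HD].
        -- destruct (MVT_cor2 (G n) (G (S n)) x (x + D)) as [z [Hz _]]; [lra|intros; apply Hd|].
           rewrite Hz. replace (x + D - x) with D by ring. rewrite Rabs_mult, (Rabs_right D) by lra.
           rewrite Rmult_comm. apply Rmult_le_compat_l; [lra|apply Hb].
        -- subst D. rewrite Rplus_0_r, Rminus_diag, Rabs_R0, Rmult_0_l. lra.
    + right. simpl pow. ring.
Qed.

Lemma Fd_per L F Fd (hper : forall x, F (x + L) = F x) (hF0 : forall x, Fd O x = F x)
  (hFd : forall (k : nat) (x : R), derivable_pt_lim (Fd k) x (Fd (S k) x)) :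
  forall k x, Fd k (x + L) = Fd k x.
Proof.
  induction k as [|k IH]; intros x.
  - rewrite !hF0; auto.
  - apply (uniqueness_limite (Fd k) x).
    + replace (Fd k) with (fun y => Fd k (y + L)) by (apply functional_extensionality; auto).
      apply deriv_shift. apply hFd.
    + apply hFd.
Qed.

Lemma Fd_perZ L (Fd : nat -> R -> R) k : (forall x, Fd k (x + L) = Fd k x) ->
  forall z x, Fd k (x + IZR z * L) = Fd k x.
Proof.
  intros H.
  assert (Hn : forall n x, Fd k (x + INR n * L) = Fd k x).
  { induction n as [|n IHn]; intro x. simpl. rewrite Rmult_0_l, Rplus_0_r; auto.
    rewrite S_INR. replace (x + (INR n + 1) * L) with ((x + INR n * L) + L) by ring.
    rewrite H; auto. }
  intros z x. destruct z as [|p|p].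
  - simpl. rewrite Rmult_0_l, Rplus_0_r; auto.
  - rewrite <- positive_nat_Z, <- INR_IZR_INZ. apply Hn.
  - replace (IZR (Z.neg p)) with (- INR (Pos.to_nat p)).
    2:{ rewrite INR_IZR_INZ, positive_nat_Z. reflexivity. }
    rewrite <- (Hn (Pos.to_nat p) (x + - INR (Pos.to_nat p) * L)). f_equal; ring.
Qed.

Lemma reduce_mod L x : 0 < L -> exists z : Z, 0 <= x - IZR z * L <= L.
Proof.
  intros hL. destruct (archimed (x / L)) as [H1 H2].
  exists (up (x / L) - 1)%Z. rewrite minus_IZR.
  assert (x = (x / L) * L) by (field; lra).
  split.
  - apply (Rmult_le_reg_r (/ L)). apply Rinv_0_lt_compat; lra.
    replace ((x - (IZR (up (x / L)) - 1) * L) * / L) with (x / L - IZR (up (x / L)) + 1) by (field; lra).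
    lra.
  - apply (Rmult_le_reg_r (/ L)). apply Rinv_0_lt_compat; lra.
    replace ((x - (IZR (up (x / L)) - 1) * L) * / L) with (x / L - IZR (up (x / L)) + 1) by (field; lra).
    replace (L * / L) with 1 by (field; lra). lra.
Qed.

Lemma Fd_bounded L F Fd (hL : 0 < L) (hper : forall x, F (x + L) = F x) (hF0 : forall x, Fd O x = F x)
  (hFd : forall (k : nat) (x : R), derivable_pt_lim (Fd k) x (Fd (S k) x)) :
  forall k, exists B, forall x, Rabs (Fd k x) <= B.
Proof.
  intros k.
  assert (Hc : forall c, 0 <= c <= L -> continuity_pt (Fd k) c).
  { intros c _. apply derivable_continuous_pt. exists (Fd (S k) c). apply hFd. }
  destruct (continuity_ab_maj (Fd k) 0 L) as [a [Ha _]]; [lra|auto|].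
  destruct (continuity_ab_min (Fd k) 0 L) as [b [Hb _]]; [lra|auto|].
  exists (Rmax (Rabs (Fd k a)) (Rabs (Fd k b))). intros x.
  destruct (reduce_mod L x hL) as [z Hz].
  replace (Fd k x) with (Fd k (x - IZR z * L)).
  2:{ rewrite <- (Fd_perZ L Fd k (Fd_per L F Fd hper hF0 hFd k) z (x - IZR z * L)). f_equal; ring. }
  set (y := x - IZR z * L) in *.
  specialize (Ha y Hz). specialize (Hb y Hz).
  unfold Rabs, Rmax. repeat destruct Rcase_abs; repeat destruct Rle_dec; lra.
Qed.

Lemma Sm_Fd L F Fd (hL : 0 < L) (hper : forall x, F (x + L) = F x) (hF0 : forall x, Fd O x = F x)
  (hFd : forall (k : nat) (x : R), derivable_pt_lim (Fd k) x (Fd (S k) x)) :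
  forall k, Sm L (fun N i => Fd k (xpos L N i)) 0 0.
Proof.
  intros k.
  assert (HB : forall n, {B | forall x, Rabs (Fd n x) <= B}).
  { intro n. apply constructive_indefinite_description. apply (Fd_bounded L F); auto. }
  set (Bf := fun n => proj1_sig (HB n)).
  assert (HBf : forall n x, Rabs (Fd n x) <= Bf n) by (intros n x; unfold Bf; apply (proj2_sig (HB n))).
  exists (fun r => Bf (r + k)%nat). split.
  { intro r. eapply Rle_trans; [apply Rabs_pos|apply (HBf _ 0)]. }
  intros N r i HN. pose proof (INR_pos N HN).
  replace (fun i => Fd k (xpos L N i)) with (fun i => Fd (0 + k)%nat (IZR i * (L / INR N) + - (L / INR N))).
  2:{ apply functional_extensionality; intro x. unfold xpos.
      rewrite Z.mod_eq by lia. rewrite !minus_IZR, mult_IZR, <- INR_IZR_INZ.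
      rewrite <- (Fd_perZ L Fd k (Fd_per L F Fd hper hF0 hFd k) (- ((x - 1) / Z.of_nat N))%Z).
      f_equal. rewrite opp_IZR. field. lra. }
  eapply Rle_trans.
  - apply (samp_bound r (fun n => Fd (n + k)%nat) (fun n => Bf (n + k)%nat) (L / INR N)).
    + unfold Rdiv; apply Rmult_le_pos; [lra|apply Rlt_le, Rinv_0_lt_compat; lra].
    + intros n x. apply hFd.
    + intros n x. apply HBf.
  - right. simpl. field.
Qed.
Lemma comps_spec m : forall s t, In t (comps m s) ->
  length t = m /\ list_sum t = s /\ (forall x, In x t -> (1 <= x)%nat).
Proof.
  induction m as [|m IH]; intros s t H.
  - destruct s; simpl in H; [|contradiction]. destruct H as [H|[]]. subst t. simpl; repeat split; auto; intros x [].
  - simpl in H. apply in_flat_map in H. destruct H as [a [Ha Ht]].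
    apply in_map_iff in Ht. destruct Ht as [t' [Et Ht']]. subst t.
    apply in_seq in Ha. destruct (IH _ _ Ht') as [H1 [H2 H3]].
    simpl. repeat split; try lia.
    intros x [Hx|Hx]; [lia|auto].
Qed.

Lemma in_le_sum t x : In x t -> (x <= list_sum t)%nat.
Proof. induction t as [|y t IH]; simpl; [contradiction|]. intros [H|H]; [lia|specialize (IH H); lia]. Qed.

Lemma sum_e t : (forall x, In x t -> (1 <= x)%nat) ->
  (2 * list_sum (map (fun x => (x - 1) / 2) t) + length t <= list_sum t)%nat.
Proof.
  induction t as [|x t IH]; intros H; [simpl; lia|].
  assert (1 <= x)%nat by (apply H; left; auto).
  pose proof (Nat.Div0.mul_div_le (x - 1) 2).
  assert (IH' := IH (fun y Hy => H y (or_intror Hy))).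
  Local Open Scope nat_scope.
  change (list_sum (x :: t)) with (x + list_sum t).
  change (map (fun x => (x - 1) / 2) (x :: t)) with (((x - 1) / 2) :: map (fun x => (x - 1) / 2) t).
  change (list_sum (((x - 1) / 2) :: map (fun x => (x - 1) / 2) t)) with
    ((x - 1) / 2 + list_sum (map (fun x => (x - 1) / 2) t)).
  change (length (x :: t)) with (S (length t)). lia.
  Local Close Scope nat_scope.
Qed.

Lemma sum_const0 (t : list nat) : list_sum (map (fun _ => 0%nat) t) = 0%nat.
Proof. induction t; simpl; auto. Qed.

Lemma sum_const1 (t : list nat) : list_sum (map (fun _ => 1%nat) t) = length t.
Proof. induction t; simpl; auto. Qed.

Lemma inv_pow_div L x n : 0 < L -> 0 < x -> / (L / x) ^ n = x ^ n * / L ^ n.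
Proof.
  intros. rewrite <- pow_inv. replace (/ (L / x)) with (x * / L) by (field; lra).
  rewrite Rpow_mult_distr, pow_inv. reflexivity.
Qed.

Lemma cfuel_eq L Fd N f i j : (3 <= j)%nat ->
  cfuel L Fd N (S f) i j =
  - sumR (map (fun m => sumR (map (fun t =>
       dcoef m / INR j * / ((L / INR N) ^ (2 + m)) *
       (prodR (map (fun jp => (cfuel L Fd N f (i + 1)%Z jp - cfuel L Fd N f i jp) / INR (jp + 1)) t)
        - prodR (map (fun jp => (cfuel L Fd N f (i - 1 + 1)%Z jp - cfuel L Fd N f (i - 1)%Z jp) / INR (jp + 1)) t)))
     (comps m (j - m - 1)))) (seq 1 ((j - 1) / 2)))
  + sumR (map (fun k => sumR (map (fun t =>
       / (INR j * INR (fact k)) * Fd k (xpos L N i) *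
       prodR (map (fun jp => cfuel L Fd N f i jp / INR (jp + 1)) t))
     (comps k (j - k - 1)))) (seq 1 ((j - 1) / 2))).
Proof. intros Hj. destruct j as [|[|[|j']]]; try lia. reflexivity. Qed.
Definition T1 L Fd f j m t N i :=
  dcoef m / INR j * / ((L / INR N) ^ (2 + m)) *
  (prodR (map (fun jp => (cfuel L Fd N f (i + 1)%Z jp - cfuel L Fd N f i jp) / INR (jp + 1)) t)
   - prodR (map (fun jp => (cfuel L Fd N f (i - 1 + 1)%Z jp - cfuel L Fd N f (i - 1)%Z jp) / INR (jp + 1)) t)).
Definition T2 L (Fd : nat -> R -> R) f j k t N i :=
  / (INR j * INR (fact k)) * Fd k (xpos L N i) *
  prodR (map (fun jp => cfuel L Fd N f i jp / INR (jp + 1)) t).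

Lemma cfuel_eq' L Fd N f i j : (3 <= j)%nat ->
  cfuel L Fd N (S f) i j =
  - sumR (map (fun m => sumR (map (fun t => T1 L Fd f j m t N i) (comps m (j - m - 1)))) (seq 1 ((j - 1) / 2)))
  + sumR (map (fun k => sumR (map (fun t => T2 L Fd f j k t N i) (comps k (j - k - 1)))) (seq 1 ((j - 1) / 2))).
Proof. intros Hj. destruct j as [|[|[|j']]]; try lia. reflexivity. Qed.

Lemma main_Sm L F Fd (hL : 0 < L) (hper : forall x, F (x + L) = F x) (hF0 : forall x, Fd O x = F x)
  (hFd : forall (k : nat) (x : R), derivable_pt_lim (Fd k) x (Fd (S k) x)) :
  forall j fuel, (j <= fuel)%nat -> Sm L (fun N i => cfuel L Fd N fuel i j) ((j - 1) / 2) 0.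
Proof.
  intro j. induction j as [j IH] using (well_founded_induction lt_wf).
  intros fuel Hjf.
  destruct fuel as [|f].
  { replace j with 0%nat by lia. apply Sm_ext with (A := fun _ _ => 0); [apply Sm_zero|intros; reflexivity]. }
  destruct (le_lt_dec 3 j) as [Hj3|Hj3].
  2:{ destruct j as [|[|[|]]]; try lia.
      - apply Sm_ext with (A := fun _ _ => 0); [apply Sm_zero|intros; reflexivity].
      - apply Sm_ext with (A := fun N i => Fd 0%nat (xpos L N i)); [apply (Sm_Fd L F); auto|intros; reflexivity].
      - apply Sm_ext with (A := fun _ _ => 0); [apply Sm_zero|intros; reflexivity]. }
  assert (IHc : forall jp, (1 <= jp)%nat -> (jp <= j - 2)%nat ->
     Sm L (fun N i => cfuel L Fd N f i jp) ((jp - 1) / 2) 0) by (intros; apply IH; lia).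
  assert (Hfac : forall jp, (1 <= jp)%nat -> (jp <= j - 2)%nat ->
     Sm L (fun N i => (cfuel L Fd N f (i + 1)%Z jp - cfuel L Fd N f i jp) / INR (jp + 1)) ((jp - 1) / 2) 1).
  { intros jp H1 H2.
    apply Sm_ext with (A := fun N i => / INR (jp + 1) * (cfuel L Fd N f (i + 1)%Z jp - cfuel L Fd N f i jp)).
    - apply Sm_scal. apply (Sm_fwd L (fun N i => cfuel L Fd N f i jp)); auto.
    - intros; unfold Rdiv; ring. }
  assert (H1 : forall m, In m (seq 1 ((j - 1) / 2)) -> forall t, In t (comps m (j - m - 1)) ->
     Sm L (T1 L Fd f j m t) ((j - 1) / 2) 0).
  { intros m Hm t Ht. apply in_seq in Hm. destruct (comps_spec _ _ _ Ht) as [Hl [Hs Hp]].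
    pose proof (Sm_prod L t (fun jp N i => (cfuel L Fd N f (i + 1)%Z jp - cfuel L Fd N f i jp) / INR (jp + 1))
       (fun x => (x - 1) / 2)%nat (fun _ => 1%nat) hL) as HP.
    rewrite sum_const1, Hl in HP.
    assert (HP' := HP (fun x Hx => Hfac x (Hp x Hx) ltac:(pose proof (in_le_sum t x Hx); lia))).
    clear HP.
    pose proof (sum_e t Hp) as Hse.
    assert (Hdiv : (list_sum (map (fun x => (x - 1) / 2) t) + 1 <= (j - 1) / 2)%nat).
    { apply Nat.div_le_lower_bound; lia. }
    eapply Sm_weaken; [exact hL| |].
    2:{ eapply Sm_ext.
        - apply (Sm_scal L (dcoef m / INR j * / L ^ (2 + m))).
          apply Sm_mulN with (n := (2 + m)%nat). apply Sm_back; [exact hL|exact HP'].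
        - intros N i HN. unfold T1. cbv beta. rewrite (inv_pow_div L (INR N)); [ring|exact hL|apply INR_pos; auto]. }
    lia. }
  assert (H2 : forall k, In k (seq 1 ((j - 1) / 2)) -> forall t, In t (comps k (j - k - 1)) ->
     Sm L (T2 L Fd f j k t) ((j - 1) / 2) 0).
  { intros k Hk t Ht. apply in_seq in Hk. destruct (comps_spec _ _ _ Ht) as [Hl [Hs Hp]].
    pose proof (Sm_prod L t (fun jp N i => cfuel L Fd N f i jp / INR (jp + 1))
       (fun x => (x - 1) / 2)%nat (fun _ => 0%nat) hL) as HP.
    rewrite sum_const0 in HP.
    assert (HP' : Sm L (fun N i => prodR (map (fun jp => cfuel L Fd N f i jp / INR (jp + 1)) t))
                  (list_sum (map (fun x => (x - 1) / 2) t))%nat 0).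
    { apply HP. intros x Hx. pose proof (in_le_sum t x Hx). pose proof (Hp x Hx).
      apply Sm_ext with (A := fun N i => / INR (x + 1) * cfuel L Fd N f i x).
      - apply Sm_scal. apply IHc; lia.
      - intros; unfold Rdiv; ring. }
    clear HP.
    pose proof (sum_e t Hp) as Hse.
    assert (Hdiv : (list_sum (map (fun x => (x - 1) / 2) t) <= (j - 1) / 2)%nat).
    { apply Nat.div_le_lower_bound; lia. }
    eapply Sm_weaken; [exact hL| |].
    2:{ eapply Sm_ext.
        - apply (Sm_scal L (/ (INR j * INR (fact k)))).
          eapply (Sm_mul L (fun N i => Fd k (xpos L N i))); [exact hL|apply (Sm_Fd L F); auto|exact HP'].
        - intros N i HN. unfold T2. ring. }
    lia. }
  apply Sm_ext with (A := fun N i =>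
     -1 * sumR (map (fun m => sumR (map (fun t => T1 L Fd f j m t N i) (comps m (j - m - 1)))) (seq 1 ((j - 1) / 2)))
     + sumR (map (fun k => sumR (map (fun t => T2 L Fd f j k t N i) (comps k (j - k - 1)))) (seq 1 ((j - 1) / 2)))).
  - apply Sm_plus.
    + apply Sm_scal.
      apply (Sm_sum L _ _ _ (fun m N i => sumR (map (fun t => T1 L Fd f j m t N i) (comps m (j - m - 1))))).
      intros m Hm. apply (Sm_sum L _ _ _ (fun t => T1 L Fd f j m t)). intros t Ht. apply H1; auto.
    + apply (Sm_sum L _ _ _ (fun k N i => sumR (map (fun t => T2 L Fd f j k t N i) (comps k (j - k - 1))))).
      intros k Hk. apply (Sm_sum L _ _ _ (fun t => T2 L Fd f j k t)). intros t Ht. apply H2; auto.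
  - intros N i HN. rewrite cfuel_eq' by lia. ring.
Qed.
Lemma ln_mono x y : 0 < x -> x <= y -> ln x <= ln y.
Proof. intros Hx Hxy. destruct (Rle_lt_or_eq_dec _ _ Hxy) as [H|H].
  apply Rlt_le, ln_increasing; auto. subst; lra. Qed.

Theorem mainTheorem6 (L : R) (F : R -> R) (Fd : nat -> R -> R)
  (hL : 0 < L)
  (hper : forall x, F (x + L) = F x)
  (hF0 : forall x, Fd O x = F x)
  (hFd : forall (k : nat) (x : R), derivable_pt_lim (Fd k) x (Fd (S k) x))
  (i j : nat) (hi : (1 <= i)%nat) (hj : (1 <= j)%nat) :
  forall eps : R, 0 < eps ->
  exists N0 : nat, forall N : nat, (2 <= N)%nat -> (N0 <= N)%nat ->
    ccoef L Fd N (Z.of_nat i) j <> 0 ->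
    ln (Rabs (ccoef L Fd N (Z.of_nat i) j)) / ln (INR N) <= (INR j - 1) / 2 + eps.
Proof.
  intros eps Heps.
  destruct (main_Sm L F Fd hL hper hF0 hFd j j (Nat.le_refl j)) as [M [HM HB]].
  set (C := M 0%nat + 1).
  assert (HC : 1 <= C) by (unfold C; specialize (HM 0%nat); lra).
  destruct (INR_archimed 1 (exp (ln C / eps))) as [N0 HN0]; [lra|].
  exists N0. intros N HN2 HN0' Hc.
  set (c := ccoef L Fd N (Z.of_nat i) j) in *.
  set (e := ((j - 1) / 2)%nat).
  assert (HNpos : 1 < INR N) by (apply (lt_INR 1); lia).
  assert (HlnN : 0 < ln (INR N)) by (rewrite <- ln_1; apply ln_increasing; lra).
  assert (Hbc : Rabs c <= C * INR N ^ e).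
  { specialize (HB N 0%nat (Z.of_nat i) ltac:(lia)). rewrite !pow_O in HB. fold e in HB. unfold c, ccoef.
    eapply Rle_trans; [exact HB|]. unfold C.
    assert (0 < INR N ^ e) by (apply pow_lt; lra).
    replace (M 0%nat * 1 * (INR N ^ e / 1)) with (M 0%nat * INR N ^ e) by field. nra. }
  assert (Hcpos : 0 < Rabs c) by (apply Rabs_pos_lt; auto).
  assert (Hl1 : ln (Rabs c) <= ln C + INR e * ln (INR N)).
  { rewrite <- ln_pow by lra. rewrite <- ln_mult; [|lra|apply pow_lt; lra]. apply ln_mono; auto. }
  assert (Hl2 : ln C <= eps * ln (INR N)).
  { assert (ln C / eps <= ln (INR N)).
    { rewrite <- (ln_exp (ln C / eps)). apply ln_mono; [apply exp_pos|].
      apply Rle_trans with (INR N0); [lra|apply le_INR; auto]. }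
    apply (Rmult_le_compat_l eps) in H; [|lra].
    replace (eps * (ln C / eps)) with (ln C) in H by (field; lra). exact H. }
  assert (He : INR e <= (INR j - 1) / 2).
  { assert (2 * e <= j - 1)%nat by (apply Nat.Div0.mul_div_le).
    apply le_INR in H. rewrite mult_INR, minus_INR in H by lia. simpl in H. lra. }
  apply (Rmult_le_reg_r (ln (INR N))); auto.
  unfold Rdiv at 1. rewrite Rmult_assoc, Rinv_l by lra. rewrite Rmult_1_r.
  nra.
Qed.
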